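(* Let $i>0$, $1\le k_2\le5$, $1\le k_1\le6$, $1\le j\le4$, and let $P=\Omega_i\,I_{k_1}^{(i+4)}I_{k_2}^{(i+4)}D_j(i)$. Then there exist $1\le k_1',k_1''\le6$, $1\le k_2',k_2''\le5$ and $1\le j',j''\le4$ such that $$r_{(ii\to i\,i-1)}P\in\big\{I_{k_1'}^{(i-1)}I_{k_2'}^{(i)}D_{j'}(i+1),\ I_{k_1'}^{(i-1)}I_{k_2'}^{(i+4)}D_{j'}(i)\big\}$$ and $$r_{(ii\to i-1\,i)}P\in\big\{I_{k_1''}^{(i-1)}I_{k_2''}^{(i)}D_{j''}(i+1),\ I_{k_1''}^{(i-1)}I_{k_2''}^{(i+4)}D_{j''}(i)\big\}.$$
   Context: Words are finite sequences of integers; $\mathrm{ev}_a$ is the number of occurrences of $a$. For $b=a+1$ and a word with $(\mathrm{ev}_a,\mathrm{ev}_b)\in\{(1,2),(2,1)\}$, $\sigma_a$ replaces the subword of letters in $\{a,b\}$, keeping positions, via $aab\leftrightarrow abb$, $aba\leftrightarrow bba$, $baa\leftrightarrow bab$. Compositions act right to left, and operators act on pairs of words componentwise. $\Omega_i=\sigma_i\sigma_{i+1}\sigma_{i+2}\sigma_{i+3}$ (so $\sigma_{i+3}$ is applied first). For a word in which the letter $i$ occurs exactly twice, $r_{(ii\to c\,d)}$ replaces the first occurrence of $i$ by $c$ and the second by $d$. Insertion: $I_k^{(a)}(w_1\cdots w_n)=w_1\cdots w_{k-1}\,a\,w_k\cdots w_n$ ($1\le k\le n+1$). With $b=a+1$,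 $c=a+2$, $d=a+3$: $D_1(a)=(bacd,cabd)$, $D_2(a)=(dbac,dcab)$, $D_3(a)=(acdb,abdc)$, $D_4(a)=(cdba,bdca)$. *)

(* Defs.v *)
From mathcomp Require Import all_boot.

Set Implicit Arguments.
Unset Strict Implicit.
Unset Printing Implicit Defensive.

Definition word := seq nat.
Definition wpair := (word * word)%type.

Definition ev (a : nat) (w : word) : nat := count_mem a w.

Definition sigma_sub (a b : nat) (s : word) : word :=
  if s == [:: a; a; b] then [:: a; b; b]
  else if s == [:: a; b; b] then [:: a; a; b]
  else if s == [:: a; b; a] then [:: b; b; a]
  else if s == [:: b; b; a] then [:: a; b; a]
  else if s == [:: b; a; a] then [:: b; a; b]
  else if s == [:: b; a; b] then [:: b; a; a]
  else s.

Fixpoint refill (a b : nat) (w t : word) : word :=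
  match w with
  | [::] => [::]
  | x :: w' =>
    if (x == a) || (x == b) then
      match t with
      | y :: t' => y :: refill a b w' t'
      | [::] => x :: refill a b w' [::]
      end
    else x :: refill a b w' t
  end.

Definition sigma (a : nat) (w : word) : option word :=
  let b := a.+1 in
  if ((ev a w == 1) && (ev b w == 2)) || ((ev a w == 2) && (ev b w == 1)) then
    Some (refill a b w (sigma_sub a b [seq x <- w | (x == a) || (x == b)]))
  else None.

Definition onpair (f : word -> option word) (p : wpair) : option wpair :=
  match f p.1, f p.2 with
  | Some x, Some y => Some (x, y)
  | _, _ => None
  end.

Definition obind (f : wpair -> option wpair) (o : option wpair) : option wpair :=
  match o with Some p => f p | None => None end.

(* Omega_i = sigma_i sigma_{i+1} sigma_{i+2} sigma_{i+3} (sigma_{i+3} first) *)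
Definition Omega (i : nat) (p : wpair) : option wpair :=
  obind (onpair (sigma i))
    (obind (onpair (sigma (i + 1)))
      (obind (onpair (sigma (i + 2)))
        (onpair (sigma (i + 3)) p))).

Fixpoint repl2 (i c d : nat) (w : word) : word :=
  match w with
  | [::] => [::]
  | x :: w' => if x == i then c :: [seq (if y == i then d else y) | y <- w']
               else x :: repl2 i c d w'
  end.

Definition rr (i c d : nat) (w : word) : option word :=
  if ev i w == 2 then Some (repl2 i c d w) else None.

Definition rP (i c d : nat) (p : wpair) : option wpair := onpair (rr i c d) p.

Definition ins (k a : nat) (w : word) : word := take k.-1 w ++ a :: drop k.-1 w.
Definition insP (k a : nat) (p : wpair) : wpair := (ins k a p.1, ins k a p.2).

(* D_1..D_4 (j outside 1..4 is never used) *)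
Definition D (j a : nat) : wpair :=
  let b := a + 1 in let c := a + 2 in let d := a + 3 in
  match j with
  | 1 => ([:: b; a; c; d], [:: c; a; b; d])
  | 2 => ([:: d; b; a; c], [:: d; c; a; b])
  | 3 => ([:: a; c; d; b], [:: a; b; d; c])
  | _ => ([:: c; d; b; a], [:: b; d; c; a])
  end.

(* Main.v *)
Require Import Defs.
From mathcomp Require Import all_boot.

Definition X0 k1 k2 j := insP k1 5 (insP k2 5 (D j 1)).
Definition okr c d P0 := has (fun a => has (fun b => has (fun e =>
   (rP 1 c d P0 == Some (insP a 0 (insP b 1 (D e 2)))) ||
   (rP 1 c d P0 == Some (insP a 0 (insP b 5 (D e 1))))) (iota 1 4)) (iota 1 5)) (iota 1 6).
Definition check k1 k2 j := if Omega 1 (X0 k1 k2 j) is Some P0 then okr 1 0 P0 && okr 0 1 P0 else false.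
Lemma allc : all (fun a => all (fun b => all (fun c => check a b c) (iota 1 4)) (iota 1 5)) (iota 1 6).
Proof. vm_compute. reflexivity. Qed.

Lemma okrP c d P0 : okr c d P0 -> exists k1' k2' j', [/\ 1 <= k1' <= 6, 1 <= k2' <= 5, 1 <= j' <= 4 &
   rP 1 c d P0 = Some (insP k1' 0 (insP k2' 1 (D j' 2))) \/
   rP 1 c d P0 = Some (insP k1' 0 (insP k2' 5 (D j' 1)))].
Proof.
case/hasP=> a; rewrite mem_iota => /andP[a1 a2].
case/hasP=> b; rewrite mem_iota => /andP[b1 b2].
case/hasP=> e; rewrite mem_iota => /andP[e1 e2].
case/orP=> /eqP H; exists a, b, e; (split; [by rewrite a1 | by rewrite b1 | by rewrite e1 | ]);
  [left|right]; exact H.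
Qed.

Section Shift.
Variable s : nat.
Let f := addn^~ s.
Let finj : injective f := @addIn s.
Definition mapP (p : wpair) : wpair := (map f p.1, map f p.2).

Lemma ev_sh a w : ev (a + s) (map f w) = ev a w.
Proof. by rewrite /ev count_map; apply: eq_count => x; rewrite /= eqn_add2r. Qed.

Lemma filter_sh a b w : [seq x <- map f w | (x == a + s) || (x == b + s)] =
  map f [seq x <- w | (x == a) || (x == b)].
Proof. by rewrite filter_map; congr map; apply: eq_filter => x; rewrite /= !eqn_add2r. Qed.

Lemma sigma_sub_sh a b t : sigma_sub (a + s) (b + s) (map f t) = map f (sigma_sub a b t).
Proof.
have H u : (map f t == map f u) = (t == u) by apply: inj_eq; apply: inj_map.
rewrite /sigma_sub.
rewrite -[[:: a + s; a + s; b + s]]/(map f [:: a; a; b]).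
rewrite -[[:: a + s; b + s; b + s]]/(map f [:: a; b; b]).
rewrite -[[:: a + s; b + s; a + s]]/(map f [:: a; b; a]).
rewrite -[[:: b + s; b + s; a + s]]/(map f [:: b; b; a]).
rewrite -[[:: b + s; a + s; a + s]]/(map f [:: b; a; a]).
rewrite -[[:: b + s; a + s; b + s]]/(map f [:: b; a; b]).
rewrite !H.
by repeat case: ifP => _.
Qed.

Lemma refill_sh a b w t : refill (a + s) (b + s) (map f w) (map f t) = map f (refill a b w t).
Proof.
elim: w t => [|x w IH] t //=; rewrite /f !eqn_add2r.
case: ifP => _; last by rewrite IH.
case: t => [|y t] /=; last by rewrite IH.
by rewrite -(IH [::]).
Qed.

Lemma sigma_sh a w : sigma (a + s) (map f w) = omap (map f) (sigma a w).
Proof.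
rewrite /sigma -addSn !ev_sh.
case: ifP => //= _.
by rewrite filter_sh sigma_sub_sh refill_sh.
Qed.

Lemma onpair_sh a p : onpair (sigma (a + s)) (mapP p) = omap mapP (onpair (sigma a) p).
Proof.
rewrite /onpair /mapP /= !sigma_sh.
by case: (sigma a p.1) => [x|] //=; case: (sigma a p.2).
Qed.

Lemma Omega_sh a p : Omega (a + s) (mapP p) = omap mapP (Omega a p).
Proof.
rewrite /Omega !(addnAC a s) onpair_sh.
case: (onpair (sigma (a + 3)) p) => [q|] //=; rewrite onpair_sh.
case: (onpair (sigma (a + 2)) q) => [q'|] //=; rewrite onpair_sh.
case: (onpair (sigma (a + 1)) q') => [q''|] //=; rewrite onpair_sh.
by case: (onpair (sigma a) q'').
Qed.

Lemma repl2_sh a c d w : repl2 (a + s) (c + s) (d + s) (map f w) = map f (repl2 a c d w).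
Proof.
elim: w => [|x w IH] //=; rewrite /f eqn_add2r; case: ifP => _; last by rewrite IH.
congr cons; elim: w {IH} => //= y w ->.
by rewrite /f eqn_add2r; case: ifP.
Qed.

Lemma rP_sh a c d p : rP (a + s) (c + s) (d + s) (mapP p) = omap mapP (rP a c d p).
Proof.
rewrite /rP /onpair /rr /mapP /= !ev_sh !repl2_sh.
by case: (ev a p.1 == 2); case: (ev a p.2 == 2).
Qed.

Lemma ins_sh k a w : ins k (a + s) (map f w) = map f (ins k a w).
Proof. by rewrite /ins map_cat /= map_take map_drop. Qed.

Lemma insP_sh k a p : insP k (a + s) (mapP p) = mapP (insP k a p).
Proof. by rewrite /insP /mapP /= !ins_sh. Qed.

Lemma D_sh j a : D j (a + s) = mapP (D j a).
Proof. by rewrite /D /mapP !(addnAC a s); case: j => [|[|[|[|?]]]]. Qed.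

End Shift.

Theorem lemma21 (i k1 k2 j : nat) :
  0 < i -> 1 <= k2 <= 5 -> 1 <= k1 <= 6 -> 1 <= j <= 4 ->
  exists P : wpair,
    Omega i (insP k1 (i + 4) (insP k2 (i + 4) (D j i))) = Some P /\
    (exists k1' k2' j', [/\ 1 <= k1' <= 6, 1 <= k2' <= 5, 1 <= j' <= 4 &
       rP i i i.-1 P = Some (insP k1' i.-1 (insP k2' i (D j' (i + 1)))) \/
       rP i i i.-1 P = Some (insP k1' i.-1 (insP k2' (i + 4) (D j' i)))]) /\
    (exists k1'' k2'' j'', [/\ 1 <= k1'' <= 6, 1 <= k2'' <= 5, 1 <= j'' <= 4 &
       rP i i.-1 i P = Some (insP k1'' i.-1 (insP k2'' i (D j'' (i + 1)))) \/
       rP i i.-1 i P = Some (insP k1'' i.-1 (insP k2'' (i + 4) (D j'' i)))]).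
Proof.
case: i => // s _ /andP[k21 k22] /andP[k11 k12] /andP[j1 j2].
have Hc : check k1 k2 j.
  move/allP: allc => /(_ k1); rewrite mem_iota k11 ltnS k12 => /(_ isT).
  move/allP => /(_ k2); rewrite mem_iota k21 ltnS k22 => /(_ isT).
  by move/allP => /(_ j); rewrite mem_iota j1 ltnS j2 => /(_ isT).
move: Hc; rewrite /check.
case E: (Omega 1 (X0 k1 k2 j)) => [P0|] // /andP[/okrP H1 /okrP H2].
have e1 : s.+1 = 1 + s by [].
have e0 : s.+1.-1 = 0 + s by [].
have e4 : s.+1 + 4 = 5 + s by rewrite e1 addnAC.
have e2 : s.+1 + 1 = 2 + s by rewrite e1 addnAC.
exists (mapP s P0); rewrite e0 e4 e2 e1; split.
  by rewrite D_sh !insP_sh Omega_sh -/(X0 k1 k2 j) E.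
split.
  case: H1 => a [b [e [ha hb he H]]]; exists a, b, e; split => //.
  by rewrite rP_sh !D_sh !insP_sh; case: H => ->; [left|right].
case: H2 => a [b [e [ha hb he H]]]; exists a, b, e; split => //.
by rewrite rP_sh !D_sh !insP_sh; case: H => ->; [left|right].
Qed.
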